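(* Let $\mathsf{C}\subset V$ be a polyhedral proper cone, $\phi$ in the interior of $\mathsf{C}^*$, $K_\phi=\mathsf{C}\cap\phi^{-1}(1)$, and $k\ge1$. For each facet $F$ of $K_\phi$ choose $x_F$ in the relative interior of $F$, and set $\omega_k=\sum_{F\in\mathcal F(K_\phi)}x_F^{\otimes k}\otimes\psi_F\in V^{\otimes k}\otimes V^*$. The following are equivalent: (i) $\omega_k$ lies in the interior of $\mathsf{C}^{\otimes_{\max}k}\otimes_{\max}\mathsf{C}^*$; (ii) for every vertex $x\in\mathcal V(K_\phi)$, $\mathrm{card}(\mathrm{Av}(x))>k$.
   Context: Proper cone: closed convex cone in a finite-dimensional real vector space, containing no line, not contained in a hyperplane; $\mathsf{C}^*$ is its dual cone; $\mathsf{C}_1\otimes_{\max}\mathsf{C}_2=\{z:(f\otimes g)(z)\ge0\ \forall f\in\mathsf{C}_1^*,g\in\mathsf{C}_2^*\}$, iterated. $\mathcal V(P)$ and $\mathcal F(P)$ are the vertex set and facet set of a polytope $P$. For each facet $F$, $\psi_F\in\mathsf{C}^*$ is a linear form with $F=K_\phi\cap\ker\psi_F$. The avoiding set of a vertex $x$ is $\mathrm{Av}(x)=\{F\in\mathcal F(K_\phi):x\notin F\}$. *)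

(* Defs.v *)
(* R : realType; a finite-dimensional real vector space is
   modelled as I -> R for a finite index type I (coordinates in a basis),
   its dual also as I -> R via the standard pairing. *)
From HB Require Import structures.
From mathcomp Require Import all_boot all_order all_algebra.
From mathcomp Require Import boolp reals.
Set Implicit Arguments. Unset Strict Implicit. Unset Printing Implicit Defensive.
Import Order.TTheory GRing.Theory Num.Theory.
Local Open Scope ring_scope.

Section Defs.
Variable R : realType.

Definition pair (J : finType) (f x : J -> R) : R := \sum_(j : J) f j * x j.

Definition dual_cone (J : finType) (C : (J -> R) -> Prop) : (J -> R) -> Prop :=
  fun f => forall x, C x -> 0 <= pair f x.

(* interior w.r.t. the (sup-norm, equivalently Euclidean) topology *)
Definition interior_of (J : finType) (S : (J -> R) -> Prop) (x : J -> R) : Prop :=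
  exists2 e : R, 0 < e & forall y, (forall j, `|y j - x j| < e) -> S y.

Definition closed_set (J : finType) (S : (J -> R) -> Prop) : Prop :=
  forall x, (forall e : R, 0 < e -> exists y, S y /\ forall j, `|y j - x j| < e) -> S x.

(* proper cone: closed convex cone, no line, not contained in a hyperplane *)
Definition proper_cone (J : finType) (C : (J -> R) -> Prop) : Prop :=
  C (fun _ => 0) /\
  [/\ (forall x y, C x -> C y -> C (fun j => x j + y j)),
      (forall t x, 0 <= t -> C x -> C (fun j => t * x j)),
      closed_set C,
      (forall x, C x -> C (fun j => - x j) -> forall j, x j = 0) &
      (forall f, (forall x, C x -> pair f x = 0) -> forall j, f j = 0)].

Definition polyhedral (J : finType) (C : (J -> R) -> Prop) : Prop :=
  exists (m : nat) (a : 'I_m -> J -> R), forall x, C x <-> forall l, 0 <= pair (a l) x.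

Definition max_tensor (J1 J2 : finType) (C1 : (J1 -> R) -> Prop)
  (C2 : (J2 -> R) -> Prop) : ((J1 * J2)%type -> R) -> Prop :=
  fun z => forall f g, dual_cone C1 f -> dual_cone C2 g ->
    0 <= \sum_(p : (J1 * J2)%type) f p.1 * g p.2 * z p.

End Defs.

(* index type of V^{(k+1) tensor}: tidx I k *)
Fixpoint tidx (I : finType) (k : nat) : finType :=
  match k with 0 => I | k'.+1 => (tidx I k' * I)%type end.

Section Tensors.
Variable R : realType.
Variable I : finType.

(* x^{(k+1) tensor} *)
Fixpoint tpowv (k : nat) (x : I -> R) : tidx I k -> R :=
  match k return tidx I k -> R with
  | 0 => x
  | k'.+1 => fun p => @tpowv k' x p.1 * x p.2
  end.

(* iterated max tensor power C^{(k+1) max-tensor} *)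
Fixpoint tpowC (k : nat) (C : (I -> R) -> Prop) : (tidx I k -> R) -> Prop :=
  match k return (tidx I k -> R) -> Prop with
  | 0 => C
  | k'.+1 => max_tensor (@tpowC k' C) C
  end.


Definition comb (t : R) (x y : I -> R) : I -> R := fun i => t * x i + (1 - t) * y i.

Definition convex_set (S : (I -> R) -> Prop) : Prop :=
  forall x y t, S x -> S y -> 0 <= t <= 1 -> S (comb t x y).

Definition is_face (K F : (I -> R) -> Prop) : Prop :=
  [/\ convex_set F, (forall x, F x -> K x) &
      forall x y t, K x -> K y -> 0 < t < 1 -> F (comb t x y) -> F x /\ F y].

Definition is_facet (K F : (I -> R) -> Prop) : Prop :=
  [/\ is_face K F, (exists x, F x), (exists x, K x /\ ~ F x) &
      forall G, is_face K G -> (forall x, F x -> G x) ->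
        (exists x, K x /\ ~ G x) -> forall x, G x -> F x].

Definition is_vertex (K : (I -> R) -> Prop) (x : I -> R) : Prop :=
  is_face K (fun y => y = x).

Definition aff_hull (F : (I -> R) -> Prop) (y : I -> R) : Prop :=
  exists (m : nat) (p : 'I_m -> I -> R) (c : 'I_m -> R),
    [/\ forall l, F (p l), \sum_l c l = 1 & forall i, y i = \sum_l c l * p l i].

Definition relint (F : (I -> R) -> Prop) (x : I -> R) : Prop :=
  F x /\ exists2 e : R, 0 < e &
    forall y, aff_hull F y -> (forall i, `|y i - x i| < e) -> F y.

Definition slice (C : (I -> R) -> Prop) (phi : I -> R) : (I -> R) -> Prop :=
  fun x => C x /\ pair phi x = 1.

End Tensors.

Arguments tpowv {R I} k x.
Arguments tpowC {R I} k C.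

(* Main.v *)
Require Import Defs.
From HB Require Import structures.
From mathcomp Require Import all_boot all_order all_algebra.
From mathcomp Require Import boolp reals ring lra.
Import Order.TTheory GRing.Theory Num.Theory.
Local Open Scope ring_scope.
Set Implicit Arguments. Unset Strict Implicit. Unset Printing Implicit Defensive.

Section Basic.
Variable R : realType.

Lemma pairC (J : finType) (f x : J -> R) : pair f x = pair x f.
Proof. by apply: eq_bigr => j _; rewrite mulrC. Qed.

Lemma pairD (J : finType) (f x y : J -> R) :
  pair f (fun j => x j + y j) = pair f x + pair f y.
Proof. by rewrite /pair -big_split; apply: eq_bigr => j _; rewrite mulrDr. Qed.

Lemma pairZ (J : finType) (f x : J -> R) (t : R) :
  pair f (fun j => t * x j) = t * pair f x.
Proof. by rewrite /pair mulr_sumr; apply: eq_bigr => j _; rewrite mulrCA. Qed.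

Lemma pairB (J : finType) (f x y : J -> R) :
  pair f (fun j => x j - y j) = pair f x - pair f y.
Proof. by rewrite /pair -sumrB; apply: eq_bigr => j _; rewrite mulrBr. Qed.

Lemma pair_comb (I : finType) (f x y : I -> R) t :
  pair f (comb t x y) = t * pair f x + (1 - t) * pair f y.
Proof.
rewrite /comb (pairD f (fun j => t * x j) (fun j => (1 - t) * y j)).
by rewrite !pairZ.
Qed.

Lemma pair0 (J : finType) (f : J -> R) : pair f (fun _ => 0) = 0.
Proof. by rewrite /pair big1 // => j _; rewrite mulr0. Qed.

Lemma fin_unif (X : finType) (P : X -> R -> Prop) :
  (forall x e e', 0 < e' <= e -> P x e -> P x e') ->
  (forall x, exists2 e, 0 < e & P x e) ->
  exists2 e, 0 < e & forall x, P x e.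
Proof.
move=> mono H.
have [E HE] : exists E : X -> R, forall x, 0 < E x /\ P x (E x).
  apply: (@fin_all_exists X (fun _ => R) (fun x e => 0 < e /\ P x e)) => x; have [e e0 Pe] := H x; by exists e.
exists (\big[Order.min/1]_x E x).
  elim/big_ind: _ => //; first by move=> a b a0 b0; rewrite lt_min a0 b0.
  by move=> x _; case: (HE x).
move=> x; case: (HE x) => Ex PEx.
have Hm : 0 < \big[Order.min/1]_x E x <= E x; last exact: (mono x (E x) _ Hm PEx).
apply/andP; split.
  elim/big_ind: _ => //; first by move=> a b a0 b0; rewrite lt_min a0 b0.
  by move=> y _; case: (HE y).
by rewrite (bigD1 x) //= ge_min lexx.
Qed.

Lemma ex_argmin (X : finType) (P : pred X) (F : X -> R) :
  (exists x, P x) -> exists x, P x /\ forall y, P y -> F x <= F y.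
Proof.
case=> x0 Px0; case: (arg_minP F Px0) => x Px Hx.
by exists x; split.
Qed.

End Basic.
Section Farkas.
Variable R : realType.

Lemma widen_lift N (i : 'I_N) : widen_ord (leqnSn N) i = lift ord_max i.
Proof. by apply: val_inj; rewrite /= /bump leqNgt ltn_ord. Qed.

Definition ext N (lam : 'I_N -> R) (c : R) (i : 'I_N.+1) : R :=
  if unlift ord_max i is Some i' then lam i' else c.

Lemma ext_widen N lam c (i : 'I_N) : ext lam c (widen_ord (leqnSn N) i) = lam i.
Proof. by rewrite /ext widen_lift liftK. Qed.

Lemma ext_max N (lam : 'I_N -> R) c : ext lam c ord_max = c.
Proof. by rewrite /ext unlift_none. Qed.

Lemma ord_cases N (P : 'I_N.+1 -> Prop) :
  (forall i : 'I_N, P (widen_ord (leqnSn N) i)) -> P ord_max -> forall i, P i.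
Proof.
move=> H1 H2 i; case: (unliftP ord_max i) => [j ->|->] //.
by rewrite -widen_lift.
Qed.

Lemma sumsq_pos (J : finType) (f : J -> R) j0 : f j0 != 0 -> 0 < \sum_j f j * f j.
Proof.
move=> nz; rewrite (bigD1 j0) //=; apply: ltr_pwDl.
  by rewrite -expr2 exprn_even_gt0 // nz orbT.
by apply: sumr_ge0 => j _; rewrite -expr2 sqr_ge0.
Qed.

Lemma pairBZl (J : finType) (u v w : J -> R) c :
  pair (fun j => u j - c * v j) w = pair u w - c * pair v w.
Proof.
rewrite pairC pairB pairZ; congr (_ - _ * _); [|]; exact: pairC.
Qed.

Lemma pairBZr (J : finType) (u w z : J -> R) c :
  pair u (fun j => w j - c * z j) = pair u w - c * pair u z.
Proof. by rewrite pairB pairZ. Qed.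

Lemma farkas (J : finType) (N : nat) (b : 'I_N -> J -> R) (f : J -> R) :
  (exists2 lam : 'I_N -> R, (forall i, 0 <= lam i) &
      forall j, f j = \sum_i lam i * b i j)
  \/ (exists z, (forall i, 0 <= pair (b i) z) /\ pair f z < 0).
Proof.
elim: N b f => [|N IH] b f.
  case: (pselect (forall j, f j = 0)) => [f0|nf0].
    by left; exists (fun _ => 0) => // j; rewrite big_ord0 f0.
  right; exists (fun j => - f j); split; first by case.
  have [j0 nz] : exists j, f j != 0.
    case: (pselect (exists j, f j != 0)) => [//|H]; exfalso; apply: nf0 => j.
    by apply/eqP; apply/negPn; apply/negP => Hj; apply: H; exists j.
  rewrite /pair; under eq_bigr do rewrite mulrN.
  by rewrite sumrN oppr_lt0 (sumsq_pos nz).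
pose b' (i : 'I_N) := b (widen_ord (leqnSn N) i).
pose bl := b ord_max.
case: (IH b' f) => [[lam lam0 Hf]|[z [Hz fz]]].
  left; exists (ext lam 0).
    by apply: ord_cases => [i|]; rewrite ?ext_widen ?ext_max.
  move=> j; rewrite big_ord_recr /= ext_max mul0r addr0 Hf.
  by apply: eq_bigr => i _; rewrite ext_widen.
case: (lerP 0 (pair bl z)) => [blz|blz].
  right; exists z; split => //.
  by apply: ord_cases => [i|] //; apply: Hz.
set be := pair bl z in blz.
pose b'' (i : 'I_N) := fun j => b' i j - (pair (b' i) z / be) * bl j.
pose f'' := fun j => f j - (pair f z / be) * bl j.
case: (IH b'' f'') => [[mu mu0 Hf]|[w [Hw fw]]].
  left.
  pose c := (pair f z - \sum_i mu i * pair (b' i) z) / be.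
  have c0 : 0 <= c.
    rewrite /c ler_ndivlMr // mul0r subr_le0; apply: ltW.
    apply: (lt_le_trans fz); apply: sumr_ge0 => i _; exact: mulr_ge0.
  exists (ext mu c).
    by apply: ord_cases => [i|]; rewrite ?ext_widen ?ext_max.
  move=> j; rewrite big_ord_recr /= ext_max.
  under eq_bigr do rewrite ext_widen.
  have E : \sum_i mu i * b'' i j =
     \sum_i mu i * b' i j - (\sum_i mu i * pair (b' i) z) / be * bl j.
    rewrite mulr_suml mulr_suml -sumrB; apply: eq_bigr => i _.
    rewrite /b''; ring.
  have := Hf j; rewrite E /f'' => e1.
  have -> : f j = (f j - pair f z / be * bl j) + (pair f z / be) * bl j by rewrite subrK.
  rewrite e1 /c /b' /bl.
  have be0 : be != 0 by rewrite lt_eqF.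
  by field.
right; exists (fun j => w j - (pair bl w / be) * z j); split.
  apply: ord_cases => [i|].
    rewrite pairBZr; have := Hw i; rewrite /b'' pairBZl.
    by rewrite -/(b' i) mulrC (mulrC (pair (b' i) z)) !mulrA.
  rewrite pairBZr -/bl -/be divfK ?subrr // lt_eqF //.
rewrite pairBZr; move: fw; rewrite /f'' pairBZl.
by rewrite mulrC (mulrC (pair f z)) !mulrA.
Qed.

End Farkas.
Section Tens.
Variable R : realType.
Variable I : finType.

Definition Sm (J1 J2 : finType) (f : J1 -> R) (g : J2 -> R) (z : (J1 * J2)%type -> R) :=
  \sum_(p : (J1 * J2)%type) f p.1 * g p.2 * z p.

Lemma sum_pair (J1 J2 : finType) (F : (J1 * J2)%type -> R) :
  \sum_(p : (J1 * J2)%type) F p = \sum_(p1 : J1) \sum_(p2 : J2) F (p1, p2).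
Proof. by rewrite pair_bigA; apply: eq_bigr => -[]. Qed.

Lemma Sm_sum (J1 J2 L : finType) f g (U : L -> J1 -> R) (W : L -> J2 -> R) :
  @Sm J1 J2 f g (fun p => \sum_l U l p.1 * W l p.2) =
  \sum_l pair f (U l) * pair g (W l).
Proof.
rewrite /Sm; under eq_bigr do rewrite mulr_sumr.
rewrite exchange_big; apply: eq_bigr => l _.
rewrite sum_pair /pair mulr_suml; apply: eq_bigr => p1 _.
rewrite mulr_sumr; apply: eq_bigr => p2 _ /=; ring.
Qed.

Lemma Sm_lin (J1 J2 : finType) (N1 N2 : nat) (lam : 'I_N1 -> R) (u : 'I_N1 -> J1 -> R)
  (mu : 'I_N2 -> R) (v : 'I_N2 -> J2 -> R) z :
  @Sm J1 J2 (fun p => \sum_i lam i * u i p) (fun q => \sum_i mu i * v i q) z =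
  \sum_i \sum_i' lam i * mu i' * Sm (u i) (v i') z.
Proof.
rewrite /Sm.
have -> : \sum_(p : (J1 * J2)%type) (\sum_i lam i * u i p.1) * (\sum_i mu i * v i p.2) * z p
  = \sum_p \sum_i \sum_i' lam i * mu i' * (u i p.1 * v i' p.2 * z p).
  apply: eq_bigr => p _; rewrite mulr_suml mulr_suml; apply: eq_bigr => i _.
  rewrite mulr_sumr mulr_suml; apply: eq_bigr => i' _; ring.
rewrite exchange_big; apply: eq_bigr => i _.
rewrite exchange_big; apply: eq_bigr => i' _.
by rewrite mulr_sumr.
Qed.

Definition tprod (J : finType) (u : J -> R) (v : I -> R) : (J * I)%type -> R :=
  fun p => u p.1 * v p.2.

Lemma tprod_pair j (u : tidx I j -> R) v x :
  \sum_(p : tidx I j.+1) tprod u v p * tpowv j.+1 x p =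
  (\sum_p u p * tpowv j x p) * pair v x.
Proof.
rewrite /= sum_pair mulr_suml; apply: eq_bigr => p1 _.
rewrite /pair mulr_sumr; apply: eq_bigr => p2 _; rewrite /tprod /=; ring.
Qed.

Fixpoint prodT (j : nat) (b : nat -> I -> R) : tidx I j -> R :=
  match j return tidx I j -> R with
  | 0 => b 0%N
  | j'.+1 => tprod (@prodT j' b) (b j'.+1)
  end.
Arguments prodT : clear implicits.

Lemma prodT_pair j b x :
  \sum_p prodT j b p * tpowv j x p = \prod_(i < j.+1) pair (b i) x.
Proof.
elim: j => [|j IH]; first by rewrite big_ord1.
by rewrite tprod_pair IH [in RHS]big_ord_recr.
Qed.

Lemma prodT_dual (C : (I -> R) -> Prop) j b :
  (forall i, dual_cone C (b i)) -> dual_cone (tpowC j C) (prodT j b).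
Proof.
move=> Hb; elim: j => [|j IH]; first exact: Hb.
move=> z Hz; exact: (Hz _ _ IH (Hb j.+1)).
Qed.

Lemma prodT_nz j b : (forall i, exists q, b i q != 0) -> exists p, prodT j b p != 0.
Proof.
move=> Hb; elim: j => [|j [p Hp]]; first exact: Hb.
have [q Hq] := Hb j.+1; exists (p, q); by rewrite /= /tprod /= mulf_neq0.
Qed.

Variable M : nat.
Variable a : 'I_M -> I -> R.

Fixpoint ap (j : nat) : tidx 'I_M j -> tidx I j -> R :=
  match j return tidx 'I_M j -> tidx I j -> R with
  | 0 => a
  | j'.+1 => fun c => tprod (@ap j' c.1) (a c.2)
  end.
Arguments ap : clear implicits.

Fixpoint apx (j : nat) : tidx 'I_M j -> (I -> R) -> R :=
  match j return tidx 'I_M j -> (I -> R) -> R with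
  | 0 => fun c x => pair (a c) x
  | j'.+1 => fun c x => @apx j' c.1 x * pair (a c.2) x
  end.
Arguments apx : clear implicits.

Lemma ap_pair j c x : \sum_p ap j c p * tpowv j x p = apx j c x.
Proof.
elim: j c => [|j IH] c //=.
by rewrite tprod_pair IH.
Qed.

End Tens.
Arguments prodT {R I}.
Arguments ap {R I M}.
Arguments apx {R I M}.
Section Geo.
Variable R : realType.
Variable I : finType.
Variable C : (I -> R) -> Prop.
Variable phi : I -> R.
Variable m : nat.
Variable Fs : 'I_m -> (I -> R) -> Prop.
Variables xF psi : 'I_m -> I -> R.
Hypothesis Hprop : proper_cone C.
Hypothesis Hphi : interior_of (dual_cone C) phi.
Hypothesis Hfacet : forall l, is_facet (slice C phi) (Fs l).
Hypothesis Hinj : forall l l', (forall y, Fs l y <-> Fs l' y) -> l = l'.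
Hypothesis Hrel : forall l, relint (Fs l) (xF l).
Hypothesis Hpsi : forall l, dual_cone C (psi l).
Hypothesis HFs : forall l y, Fs l y <-> (slice C phi y /\ pair (psi l) y = 0).

Local Notation K := (slice C phi).

Lemma C0 : C (fun _ => 0). Proof. by case: Hprop. Qed.
Lemma CD x y : C x -> C y -> C (fun j => x j + y j).
Proof. by case: Hprop => _ [H _ _ _ _]; apply: H. Qed.
Lemma CZ t x : 0 <= t -> C x -> C (fun j => t * x j).
Proof. by case: Hprop => _ [_ H _ _ _]; apply: H. Qed.
Lemma Cpointed x : C x -> C (fun j => - x j) -> forall j, x j = 0.
Proof. by case: Hprop => _ [_ _ _ H _]; apply: H. Qed.
Lemma Cspan f : (forall x, C x -> pair f x = 0) -> forall j, f j = 0.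
Proof. by case: Hprop => _ [_ _ _ _ H]; apply: H. Qed.

Lemma phi_dual : dual_cone C phi.
Proof. by case: Hphi => e e0 H; apply: H => j; rewrite subrr normr0. Qed.

Lemma normsgn (b : bool) : `|(-1) ^+ b : R| = 1.
Proof. by case: b; rewrite ?expr0 ?expr1 ?normrN1 ?normr1. Qed.

Lemma phi_pos : exists2 r : R, 0 < r & forall z, C z -> r * \sum_i `|z i| <= pair phi z.
Proof.
case: Hphi => e e0 H; exists (e / 2); first by rewrite divr_gt0.
move=> z Cz.
pose s := fun j => (-1) ^+ (z j < 0)%R : R.
have := H (fun j => phi j - e / 2 * s j).
have Hy : forall j, `|phi j - e / 2 * s j - phi j| < e.
  move=> j; rewrite addrAC subrr add0r normrN normrM normsgn mulr1.
  by rewrite ger0_norm ?divr_ge0 ?ltW // ltr_pdivrMr // ltr_pMr // ltr1n.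
move=> /(_ Hy) /(_ z Cz); rewrite pairBZl.
have -> : pair s z = \sum_i `|z i| by apply: eq_bigr => i _; rewrite normrEsign.
by rewrite subr_ge0.
Qed.

Lemma C_zero z : C z -> pair phi z = 0 -> forall i, z i = 0.
Proof.
move=> Cz pz i; case: phi_pos => r r0 /(_ z Cz); rewrite pz => H.
have S0 : \sum_i `|z i| = 0.
  apply/eqP; rewrite eq_le sumr_ge0 // andbT.
  by rewrite -(pmulr_rle0 _ r0).
by apply/eqP; rewrite -normr_eq0; apply/eqP; apply: (psumr_eq0P _ S0).
Qed.

Lemma phi_ge0 z : C z -> 0 <= pair phi z.
Proof. by move=> Cz; apply: phi_dual. Qed.

Lemma C_scale z : C z -> 0 < pair phi z -> K (fun i => (pair phi z)^-1 * z i).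
Proof.
move=> Cz pz; split; first by apply: CZ => //; rewrite invr_ge0 ltW.
by rewrite pairZ mulVf // gt_eqF.
Qed.

Lemma Kconv x y t : K x -> K y -> 0 <= t <= 1 -> K (comb t x y).
Proof.
move=> [Cx px] [Cy py] /andP[t0 t1]; split.
  by apply: CD; apply: CZ => //; rewrite subr_ge0.
by rewrite pair_comb px py; ring.
Qed.

Lemma face_zero b : dual_cone C b -> is_face K (fun y => K y /\ pair b y = 0).
Proof.
move=> Hb; split.
- move=> x y t [Kx bx] [Ky byy] t01; split; first exact: Kconv.
  by rewrite pair_comb bx byy; ring.
- by move=> x [].
move=> x y t Kx Ky /andP[t0 t1] [_]; rewrite pair_comb => H.
have bx : 0 <= pair b x by apply: Hb; case: Kx.
have byy : 0 <= pair b y by apply: Hb; case: Ky.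
have h1 : 0 <= t * pair b x by rewrite mulr_ge0 // ltW.
have h2 : 0 <= (1 - t) * pair b y by rewrite mulr_ge0 // subr_ge0 ltW.
move/eqP: H; rewrite paddr_eq0 // => /andP[/eqP e1 /eqP e2].
split; split => //.
  by move: e1 => /eqP; rewrite mulf_eq0 gt_eqF //= => /eqP.
by move: e2 => /eqP; rewrite mulf_eq0 subr_eq0 (gt_eqF t1) /= => /eqP.
Qed.


Lemma K_C y : K y -> C y. Proof. by case. Qed.
Lemma Fs_K l y : Fs l y -> K y. Proof. by case/HFs. Qed.

Lemma relint_zero b l y : dual_cone C b -> pair b (xF l) = 0 -> Fs l y -> pair b y = 0.
Proof.
move=> Hb bx Fy; case: (Hrel l) => Fx [e e0 He].
set x := xF l in bx Fx He *.
pose S := \sum_i `|x i - y i|.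
have S0 : 0 <= S by apply: sumr_ge0.
pose s := e / (1 + S).
have s0 : 0 < s by rewrite divr_gt0 //; lra.
pose y' := fun i => x i + s * (x i - y i).
have Hy' : Fs l y'.
  apply: He.
  - exists 2%N, (fun k : 'I_2 => if val k == 0%N then x else y),
      (fun k : 'I_2 => if val k == 0%N then 1 + s else - s).
    split.
    + by move=> k; case: (val k == 0%N).
    + by rewrite big_ord_recr big_ord1 /=; ring.
    + by move=> i; rewrite big_ord_recr big_ord1 /= /y'; ring.
  - move=> i; rewrite /y' addrAC subrr add0r normrM gtr0_norm //.
    apply: (@le_lt_trans _ _ (s * S)).
      rewrite ler_pM2l //; rewrite /S (bigD1 i) //= lerDl; exact: sumr_ge0.
    have S1 : 0 < 1 + S by lra.
    rewrite /s mulrAC ltr_pdivrMr // ltr_pM2l //; lra.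
have Cy' : C y' by apply: K_C; apply: (Fs_K Hy').
have Cy : C y by apply: K_C; apply: (Fs_K Fy).
have := Hb _ Cy'.
rewrite /y' pairD pairZ pairB bx => H.
have := Hb _ Cy => H2.
apply/eqP; rewrite eq_le H2 andbT.
nra.
Qed.

Lemma pair_zero_K b : (forall x, K x -> pair b x = 0) -> forall z, C z -> pair b z = 0.
Proof.
move=> H0 z Cz; case: (lerP (pair phi z) 0) => pz.
  have pz0 : pair phi z = 0 by apply/eqP; rewrite eq_le pz phi_ge0.
  by rewrite /pair big1 // => j _; rewrite (C_zero Cz pz0) mulr0.
have := H0 _ (C_scale Cz pz); rewrite pairZ => /eqP.
by rewrite mulf_eq0 invr_eq0 gt_eqF //= => /eqP.
Qed.

Lemma kill b l l' : dual_cone C b -> (exists i, b i != 0) ->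
  pair b (xF l) = 0 -> pair b (xF l') = 0 -> l = l'.
Proof.
move=> Hb [i0 bi0] bl bl'.
have Gface := face_zero Hb.
have proper : exists x, K x /\ ~ (K x /\ pair b x = 0).
  case: (pselect (exists x, K x /\ ~ (K x /\ pair b x = 0))) => // H; exfalso.
  have H0 : forall x, K x -> pair b x = 0.
    move=> x Kx; case: (pselect (pair b x = 0)) => // nb.
    by exfalso; apply: H; exists x; split => // -[].
  have := Cspan (pair_zero_K H0) i0; move/eqP; by rewrite (negbTE bi0).
have sub l1 : pair b (xF l1) = 0 -> forall y, Fs l1 y -> K y /\ pair b y = 0.
  move=> h y Fy; split; [exact: Fs_K Fy | exact: relint_zero Hb h Fy].
have max l1 : pair b (xF l1) = 0 -> forall y, K y /\ pair b y = 0 -> Fs l1 y.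
  move=> h; case: (Hfacet l1) => _ _ _ Hmax; exact: Hmax _ Gface (sub l1 h) proper.
apply: Hinj => y; split => Hy.
  exact: max l' bl' _ (sub l bl y Hy).
exact: max l bl _ (sub l' bl' y Hy).
Qed.

Lemma psi_nz l : exists q, psi l q != 0.
Proof.
case: (pselect (exists q, psi l q != 0)) => // H; exfalso.
case: (Hfacet l) => _ _ [x [Kx nFx]] _; apply: nFx; apply/HFs; split => //.
rewrite /pair big1 // => j _.
case: (pselect (psi l j = 0)) => [->|nj]; first by rewrite mul0r.
by exfalso; apply: H; exists j; apply/eqP.
Qed.


Lemma nz_of_pair (f x : I -> R) : pair f x != 0 -> exists q, f q != 0.
Proof.
move=> H; case: (pselect (exists q, f q != 0)) => // nH; exfalso; move: H.
rewrite /pair big1 ?eqxx // => j _.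
case: (pselect (f j = 0)) => [->|nj]; first by rewrite mul0r.
by exfalso; apply: nH; exists j; apply/eqP.
Qed.

Lemma partA k' :
  interior_of (max_tensor (tpowC k' C) (dual_cone C))
    (fun p : (tidx I k' * I)%type => \sum_(l < m) tpowv k' (xF l) p.1 * psi l p.2) ->
  forall x, K x -> (k'.+1 < #|[set l : 'I_m | `[< ~ Fs l x >]]|)%N.
Proof.
move=> [e e0 He] x Kx; rewrite ltnNge; apply/negP => Hle.
set L := [set l : 'I_m | `[< ~ Fs l x >]] in Hle.
pose b := fun i : nat => nth phi [seq psi l | l <- enum L] i.
have bprop : forall i, dual_cone C (b i) /\ exists q, b i q != 0.
  move=> i; rewrite /b.
  have phinz : exists q, phi q != 0.
    by apply: (@nz_of_pair phi x); case: Kx => _ ->; rewrite oner_neq0.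
  case E: (enum L) => [|l0 s].
    by rewrite nth_nil; split; [exact: phi_dual | exact: phinz].
  case: (ltnP i (size (l0 :: s))) => h.
    by rewrite (nth_map l0) //; split; [exact: Hpsi | exact: psi_nz].
  rewrite nth_default ?size_map //; split; [exact: phi_dual | exact: phinz].
have bL : forall l, l \in L -> exists2 i, (i < k'.+1)%N & b i = psi l.
  move=> l lL; exists (index l (enum L)).
    apply: (leq_trans _ Hle); rewrite cardE index_mem mem_enum //.
  rewrite /b (nth_map l); last by rewrite index_mem mem_enum.
  by rewrite nth_index // mem_enum.
pose F := prodT k' b.
have Fd : dual_cone (tpowC k' C) F by apply: prodT_dual => i; case: (bprop i).
have [p0 Fp0] : exists p, F p != 0 by apply: prodT_nz => i; case: (bprop i).
have [i0 xi0] : exists q, x q != 0.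
  by apply: (@nz_of_pair x phi); rewrite pairC; case: Kx => _ ->; rewrite oner_neq0.
have xd : dual_cone (dual_cone C) x.
  by move=> f Hf; rewrite pairC; apply: Hf; apply: K_C.
set om := (fun p : (tidx I k' * I)%type => \sum_(l < m) tpowv k' (xF l) p.1 * psi l p.2).
have Som : Sm F x om = 0.
  rewrite /om (Sm_sum F x (fun l => tpowv k' (xF l)) psi) big1 // => l _.
  rewrite /pair prodT_pair.
  case: (pselect (l \in L)) => lL.
    have [i ik bi] := bL l lL.
    apply/eqP; rewrite mulf_eq0; apply/orP; left.
    apply/prodf_eq0; exists (Ordinal ik) => //=.
    rewrite bi; case: (Hrel l) => Fx _; case: (HFs l (xF l)) => H _.
    by case: (H Fx) => _ ->.
  have Fx : Fs l x.
    case: (pselect (Fs l x)) => // nF; exfalso; apply: lL.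
    by rewrite inE; apply/asboolP.
  case: (HFs l x) => H _; case: (H Fx) => _ h.
  by rewrite -/(pair x (psi l)) pairC h mulr0.
pose G := fun p : (tidx I k' * I)%type => F p.1 * x p.2.
pose S := \sum_p `|G p|.
have S0 : 0 <= S by apply: sumr_ge0.
pose d := e / (1 + S).
have d0 : 0 < d by rewrite divr_gt0 //; lra.
have := He (fun p => om p - d * G p).
have Hy : forall p, `|om p - d * G p - om p| < e.
  move=> p; rewrite addrAC subrr add0r normrN normrM gtr0_norm //.
  apply: (@le_lt_trans _ _ (d * S)).
    rewrite ler_pM2l //; rewrite /S (bigD1 p) //= lerDl; exact: sumr_ge0.
  have S1 : 0 < 1 + S by lra.
  rewrite /d mulrAC ltr_pdivrMr // ltr_pM2l //; lra.
move=> /(_ Hy F x Fd xd).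
have -> : \sum_(p : (tidx I k' * I)%type) F p.1 * x p.2 * (om p - d * G p) =
   Sm F x om - d * \sum_p G p * G p.
  rewrite /Sm mulr_sumr -sumrB; apply: eq_bigr => p _; rewrite /G; ring.
rewrite Som sub0r oppr_ge0 pmulr_rle0 // => H.
have : 0 < \sum_p G p * G p.
  apply: (@sumsq_pos _ _ _ (p0, i0)); by rewrite /G mulf_neq0.
by rewrite ltNge H.
Qed.


Variable M : nat.
Variable a : 'I_M -> I -> R.
Hypothesis Hpoly : forall x, C x <-> forall l, 0 <= pair (a l) x.

Lemma a_dual j : dual_cone C (a j).
Proof. by move=> z /Hpoly. Qed.

Lemma dual_gen (J : finType) (N : nat) (b : 'I_N -> J -> R) (D : (J -> R) -> Prop) f :
  (forall z, (forall i, 0 <= pair (b i) z) -> D z) -> dual_cone D f ->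
  exists2 lam : 'I_N -> R, (forall i, 0 <= lam i) & forall j, f j = \sum_i lam i * b i j.
Proof.
move=> HD Hf; case: (farkas b f) => // -[z [Hz fz]]; exfalso.
by have := Hf _ (HD _ Hz); rewrite leNgt fz.
Qed.

Lemma Sm_linl (J1 J2 : finType) (N1 : nat) (lam : 'I_N1 -> R) (u : 'I_N1 -> J1 -> R)
  (g : J2 -> R) z :
  @Sm _ J1 J2 (fun p => \sum_i lam i * u i p) g z = \sum_i lam i * Sm (u i) g z.
Proof.
rewrite /Sm; under eq_bigr do rewrite !mulr_suml.
rewrite exchange_big; apply: eq_bigr => i _; rewrite mulr_sumr.
by apply: eq_bigr => p _; ring.
Qed.

Lemma T_desc j z : tpowC j C z <-> forall c, 0 <= pair (ap a j c) z.
Proof.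
elim: j z => [|j IH] z; first exact: Hpoly.
split.
  move=> Hz [c i]; rewrite /pair /=; apply: Hz.
    by move=> w /IH; apply.
  exact: a_dual.
move=> Hc f g df dg.
have Tw : forall w : tidx I j -> R,
    (forall i : 'I_#|tidx 'I_M j|, 0 <= pair (ap a j (enum_val i)) w) -> tpowC j C w.
  by move=> w Hw; apply: (proj2 (IH w)) => c; rewrite -(enum_rankK c); apply: Hw.
have [lam lam0 Hf] := @dual_gen _ _
  (fun i : 'I_#|tidx 'I_M j| => ap a j (enum_val i)) _ f Tw df.
have [mu mu0 Hg] := @dual_gen _ _ a _ g (fun w Hw => proj2 (Hpoly w) Hw) dg.
have -> : f = (fun p => \sum_i lam i * ap a j (enum_val i) p) by apply: funext.
have -> : g = (fun q => \sum_i mu i * a i q) by apply: funext.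
suff H : 0 <= @Sm R _ _ (fun p => \sum_i lam i * ap a j (enum_val i) p)
   (fun q => \sum_i mu i * a i q) z by exact: H.
rewrite Sm_lin; apply: sumr_ge0 => i _; apply: sumr_ge0 => i' _.
apply: mulr_ge0; first exact: mulr_ge0.
exact: (Hc (enum_val i, i')).
Qed.

Lemma dual_T j f : dual_cone (tpowC j C) f ->
  exists2 lam : 'I_#|tidx 'I_M j| -> R, (forall i, 0 <= lam i) &
    forall p, f p = \sum_i lam i * ap a j (enum_val i) p.
Proof.
apply: dual_gen => w Hw; apply/T_desc => c.
by rewrite -(enum_rankK c); apply: Hw.
Qed.

Definition tight (g : I -> R) := [set j : 'I_M | pair (a j) g == 0].

Lemma walk (w : I -> R) n g : K g -> (#|~: tight g| < n)%N ->
  exists2 v, is_vertex K v & pair w v <= pair w g.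
Proof.
elim: n g => [|n IH] g Kg Hn //.
case: (pselect (is_vertex K g)) => Hv; first by exists g.
have [x [y [t [Kx Ky t01 Eg nxy]]]] : exists x y t,
    [/\ K x, K y, 0 < t < 1, comb t x y = g & ~ (x = g /\ y = g)].
  case: (pselect (exists x y t,
    [/\ K x, K y, 0 < t < 1, comb t x y = g & ~ (x = g /\ y = g)])) => // H.
  exfalso; apply: Hv; split.
  - move=> x y t -> -> _; apply: funext => i; rewrite /comb; ring.
  - by move=> x ->.
  move=> x y t Kx Ky t01 Eg.
  case: (pselect (x = g /\ y = g)) => // nxy; exfalso; apply: H.
  by exists x, y, t; split.
pose d := fun i => x i - y i.
have [i0 di0] : exists i, d i != 0.
  case: (pselect (exists i, d i != 0)) => // H; exfalso; apply: nxy.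
  have xy : x = y.
    apply: funext => i; apply/eqP; rewrite -subr_eq0; apply/negPn/negP => h.
    by apply: H; exists i.
  have xg : x = g by rewrite -Eg -xy; apply: funext => i; rewrite /comb; ring.
  by split => //; rewrite -xy.
have tight_d : forall j, j \in tight g -> pair (a j) d = 0.
  move=> j; rewrite inE => /eqP h.
  have [_ _ Hext] := face_zero (a_dual j).
  have := Hext x y t Kx Ky t01; rewrite Eg => /(_ (conj Kg h)) [[_ h1] [_ h2]].
  by rewrite /d pairB h1 h2 subrr.
have phid : pair phi d = 0 by rewrite /d pairB; case: Kx => _ ->; case: Ky => _ ->; rewrite subrr.
pose s : R := if pair w d <= 0 then 1 else -1.
have s0 : s != 0 by rewrite /s; case: ifP => _; rewrite ?oppr_eq0 oner_neq0.
pose dd := fun i => s * d i.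
have wdd : pair w dd <= 0.
  rewrite /dd pairZ /s; case: ifP => h; first by rewrite mul1r.
  by rewrite mulN1r oppr_le0 ltW // ltNge h.
have tdd : forall j, j \in tight g -> pair (a j) dd = 0.
  by move=> j hj; rewrite /dd pairZ tight_d // mulr0.
have phidd : pair phi dd = 0 by rewrite /dd pairZ phid mulr0.
have [j1 hj1] : exists j, pair (a j) dd < 0.
  case: (pselect (exists j, pair (a j) dd < 0)) => // H; exfalso.
  have Cdd : C dd.
    apply/Hpoly => j; rewrite leNgt; apply/negP => h; apply: H; by exists j.
  have := C_zero Cdd phidd i0; rewrite /dd => /eqP; by rewrite mulf_eq0 (negbTE s0) (negbTE di0).
have [js [Pjs Hjs]] := @ex_argmin _ _ (fun j => pair (a j) dd < 0)
   (fun j => pair (a j) g / (- pair (a j) dd)) (ex_intro _ j1 hj1).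
set st := pair (a js) g / (- pair (a js) dd) in Hjs.
have Cg : C g by case: Kg.
have ag : forall j, 0 <= pair (a j) g by apply/Hpoly.
have st0 : 0 <= st by rewrite /st divr_ge0 // oppr_ge0 ltW.
pose g' := fun i => g i + st * dd i.
have ag' : forall j, pair (a j) g' = pair (a j) g + st * pair (a j) dd.
  by move=> j; rewrite /g' pairD pairZ.
have Kg' : K g'.
  split; last by rewrite /g' pairD pairZ phidd mulr0 addr0; case: Kg.
  apply/Hpoly => j; rewrite ag'.
  case: (ltrP (pair (a j) dd) 0) => hj.
    have := Hjs j hj; rewrite ler_pdivlMr ?oppr_gt0 // => h.
    have h2 : st * - pair (a j) dd <= pair (a j) g.
      apply: (le_trans _ h); rewrite ler_pM2r ?oppr_gt0 //.
    by move: h2; rewrite mulrN; lra.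
  by apply: addr_ge0 => //; apply: mulr_ge0.
have wg' : pair w g' <= pair w g.
  rewrite /g' pairD pairZ gerDl; exact: mulr_ge0_le0.
have Hpr : tight g \proper tight g'.
  apply/properP; split.
    apply/subsetP => j; rewrite !inE => /eqP h.
    by rewrite ag' h tdd ?inE ?h // mulr0 addr0.
  exists js.
    rewrite inE ag' /st; apply/eqP.
    have hn : pair (a js) dd != 0 by rewrite lt_eqF.
    by field.
  rewrite inE; apply/negP => /eqP h.
  have := tdd js; rewrite inE h eqxx => /(_ isT) e0.
  by move: Pjs; rewrite e0 ltxx.
have Hc : (#|~: tight g'| < n)%N.
  rewrite -properC in Hpr; have := proper_card Hpr.
  move=> h; exact: (leq_trans h).
have [v Hv2 hv] := IH g' Kg' Hc.
by exists v => //; apply: (le_trans hv).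
Qed.

Lemma vertex_K v : is_vertex K v -> K v.
Proof. by case=> _ H _; apply: H. Qed.

Lemma vertex_unique v v' : is_vertex K v -> is_vertex K v' -> tight v = tight v' -> v = v'.
Proof.
move=> Hv Hv' Tvv.
have Kv := vertex_K Hv; have Kv' := vertex_K Hv'.
pose d := fun i => v' i - v i.
have ad : forall j, pair (a j) v = 0 -> pair (a j) d = 0.
  move=> j h; have : j \in tight v' by rewrite -Tvv inE h.
  by rewrite inE => /eqP h'; rewrite /d pairB h h' subrr.
have av : forall j, 0 <= pair (a j) v by apply/Hpoly; case: Kv.
have [s s0 Hs] : exists2 s : R, 0 < s & forall j, s * `|pair (a j) d| <= pair (a j) v.
  apply: (@fin_unif _ _ (fun j s => s * `|pair (a j) d| <= pair (a j) v)).
- move=> j e e' /andP[e'0 e'e] h; apply: le_trans h.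
  by rewrite ler_wpM2r.
- move=> j; case: (pselect (pair (a j) d = 0)) => h.
    by exists 1 => //; rewrite h normr0 mulr0.
  have hv : pair (a j) v != 0 by apply/eqP => h'; apply: h; apply: ad.
  have hd : `|pair (a j) d| != 0 by rewrite normr_eq0; apply/eqP.
  exists (pair (a j) v / `|pair (a j) d|); last by rewrite divfK.
  apply: divr_gt0; first by rewrite lt_def hv av.
  by rewrite normr_gt0; rewrite normr_eq0 in hd.
have phid : pair phi d = 0 by rewrite /d pairB; case: Kv => _ ->; case: Kv' => _ ->; rewrite subrr.
pose up := fun i => v i + s * d i.
pose um := fun i => v i - s * d i.
have Kup : K up.
  split; last by rewrite /up pairD pairZ phid mulr0 addr0; case: Kv.
  apply/Hpoly => j; rewrite /up pairD pairZ.
  have h1 := Hs j; have h2 := ler_norm (pair (a j) d); have h3 := ler_norm (- pair (a j) d).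
  rewrite normrN in h3; nra.
have Kum : K um.
  split; last by rewrite /um pairB pairZ phid mulr0 subr0; case: Kv.
  apply/Hpoly => j; rewrite /um pairB pairZ.
  have h1 := Hs j; have h2 := ler_norm (pair (a j) d); have h3 := ler_norm (- pair (a j) d).
  rewrite normrN in h3; nra.
have Ec : comb (1 / 2) up um = v.
  by apply: funext => i; rewrite /comb /up /um; field.
case: Hv => _ _ Hext.
have [Eup _] := Hext up um (1 / 2) Kup Kum ltac:(apply/andP; split; lra) Ec.
apply: funext => i; have : up i = v i by rewrite Eup.
rewrite /up => h.
have : s * d i = 0 by lra.
move/eqP; rewrite mulf_eq0 gt_eqF //= /d => /eqP h2; lra.
Qed.

Lemma kill_card b : dual_cone C b -> (exists i, b i != 0) ->
  (#|[set l | pair b (xF l) == 0%R]| <= 1)%N.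
Proof.
move=> Hb nz; apply/card_le1_eqP => l l'; rewrite !inE => /eqP h /eqP h'.
exact: (kill Hb nz h' h).
Qed.

Lemma zeros_card j c : (exists p, ap a j c p != 0) ->
  (#|[set l | apx a j c (xF l) == 0%R]| <= j.+1)%N.
Proof.
elim: j c => [|j IH] c [p hp].
  by apply: kill_card; [exact: a_dual | exists p].
case: c p hp => c1 i [p1 p2] /=; rewrite /tprod /= mulf_eq0 negb_or => /andP[h1 h2].
apply: (@leq_trans #|[set l | apx a j c1 (xF l) == 0%R] :|: [set l | pair (a i) (xF l) == 0%R]|).
  by apply: subset_leq_card; apply/subsetP => l; rewrite !inE mulf_eq0.
rewrite cardsU; apply: (leq_trans (leq_subr _ _)).
rewrite -addn1; apply: leq_add; first by apply: IH; exists p1.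
by apply: kill_card; [exact: a_dual | exists p2].
Qed.

Lemma apx_ge0 j c x : C x -> 0 <= apx a j c x.
Proof.
move=> Cx; elim: j c => [|j IH] c /=; first by move/Hpoly: Cx.
by apply: mulr_ge0; [apply: IH | move/Hpoly: Cx].
Qed.

Lemma pair_suml (A : 'I_m -> R) (W : 'I_m -> I -> R) v :
  pair (fun i => \sum_l A l * W l i) v = \sum_l A l * pair (W l) v.
Proof.
rewrite /pair; under eq_bigr do rewrite mulr_suml.
rewrite exchange_big; apply: eq_bigr => l _; rewrite mulr_sumr.
by apply: eq_bigr => i _; rewrite mulrA.
Qed.

Definition wc k' c := fun i => \sum_l apx a k' c (xF l) * psi l i.
Arguments wc : clear implicits.

Lemma vertex_pos k' c v : K v ->
  (k'.+1 < #|[set l : 'I_m | `[< ~ Fs l v >]]|)%N ->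
  (exists p, ap a k' c p != 0) -> 0 < pair (wc k' c) v.
Proof.
move=> Kv Hav nz.
set Av := [set l : 'I_m | `[< ~ Fs l v >]] in Hav.
set Z := [set l | apx a k' c (xF l) == 0].
have HZ := zeros_card nz; rewrite -/Z in HZ.
have [l [lA lZ]] : exists l, l \in Av /\ l \notin Z.
  case: (pselect (exists l, l \in Av /\ l \notin Z)) => // H; exfalso.
  have : Av \subset Z.
    apply/subsetP => l lA; apply/negPn/negP => nZ; apply: H; by exists l.
  move/subset_leq_card => h.
  by have := leq_trans Hav (leq_trans h HZ); rewrite ltnn.
have xC : forall l, C (xF l).
  by move=> l0; case: (Hrel l0) => Fx _; apply: K_C; apply: (Fs_K Fx).
have pv : forall l, 0 <= pair (psi l) v by move=> l0; apply: Hpsi; apply: K_C.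
have term : 0 < apx a k' c (xF l) * pair (psi l) v.
  apply: mulr_gt0.
    by rewrite lt_def apx_ge0 // andbT; move: lZ; rewrite inE.
  rewrite lt_def pv andbT; apply/eqP => h.
  move: lA; rewrite inE => /asboolP; apply; apply/HFs; split => //.
rewrite /wc pair_suml (bigD1 l) //=.
apply: (lt_le_trans term); rewrite lerDl; apply: sumr_ge0 => l0 _.
by apply: mulr_ge0; [apply: apx_ge0 | apply: pv].
Qed.


Lemma unif k' :
  (forall v, is_vertex K v -> (k'.+1 < #|[set l : 'I_m | `[< ~ Fs l v >]]|)%N) ->
  exists2 eps : R, 0 < eps & forall c, (exists p, ap a k' c p != 0) ->
    forall g, K g -> eps <= pair (wc k' c) g.
Proof.
move=> Hv.
have [eps eps0 He] : exists2 eps : R, 0 < eps & forall S : {set 'I_M}, forall v,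
    is_vertex K v -> tight v = S -> forall c, (exists p, ap a k' c p != 0) ->
    eps <= pair (wc k' c) v.
  apply: (@fin_unif _ _ (fun S eps => forall v, is_vertex K v -> tight v = S ->
    forall c, (exists p, ap a k' c p != 0) -> eps <= pair (wc k' c) v)).
    by move=> S e e' /andP[_ h] H v Hv' Tv c nz; apply: le_trans h (H v Hv' Tv c nz).
  move=> S; case: (pselect (exists v, is_vertex K v /\ tight v = S)) => [[v0 [Hv0 T0]]|nS];
    last first.
    by exists 1 => // v Hv' Tv; exfalso; apply: nS; exists v; split.
  have [e e0 He] : exists2 e : R, 0 < e & forall c, (exists p, ap a k' c p != 0) ->
      e <= pair (wc k' c) v0.
    apply: (@fin_unif _ _ (fun c e => (exists p, ap a k' c p != 0) -> e <= pair (wc k' c) v0)).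
      by move=> c e e' /andP[_ h] H nz; apply: le_trans h (H nz).
    move=> c; case: (pselect (exists p, ap a k' c p != 0)) => nz.
      exists (pair (wc k' c) v0) => //.
      by apply: vertex_pos => //; [exact: vertex_K | exact: Hv].
    by exists 1.
  exists e => // v Hv' Tv c nz.
  by rewrite (vertex_unique Hv' Hv0) ?Tv ?T0 //; exact: He.
exists eps => // c nz g Kg.
have [v Hv' hv] := @walk (wc k' c) #|~: tight g|.+1 g Kg (ltnSn _).
by apply: (le_trans _ hv); exact: He (tight v) v Hv' erefl c nz.
Qed.

Lemma partB k' :
  (forall v, is_vertex K v -> (k'.+1 < #|[set l : 'I_m | `[< ~ Fs l v >]]|)%N) ->
  interior_of (max_tensor (tpowC k' C) (dual_cone C))
    (fun p : (tidx I k' * I)%type => \sum_(l < m) tpowv k' (xF l) p.1 * psi l p.2).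
Proof.
move=> Hv.
have [eps eps0 He] := unif Hv.
have [r r0 Hr] := phi_pos.
set om := (fun p : (tidx I k' * I)%type => \sum_(l < m) tpowv k' (xF l) p.1 * psi l p.2).
pose A := 1 + \sum_c \sum_p `|ap a k' c p|.
have Ac : forall c, \sum_p `|ap a k' c p| <= A.
  move=> c; rewrite /A (bigD1 c) //=.
  have h1 : 0 <= \sum_(c' | c' != c) \sum_p `|ap a k' c' p|.
    by apply: sumr_ge0 => c' _; apply: sumr_ge0.
  lra.
have A0 : 0 < A.
  have h : 0 <= \sum_c \sum_p `|ap a k' c p|.
    by apply: sumr_ge0 => c' _; apply: sumr_ge0.
  rewrite /A; lra.
have e0 : 0 < eps * r / A by rewrite divr_gt0 // mulr_gt0.
exists (eps * r / A) => // y Hy f g df dg.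
have [lam lam0 Hf] := dual_T df.
have Cg : C g by apply/Hpoly => j; rewrite pairC; apply: dg; exact: a_dual.
have -> : f = (fun p => \sum_i lam i * ap a k' (enum_val i) p) by apply: funext.
suff H : 0 <= @Sm R _ _ (fun p => \sum_i lam i * ap a k' (enum_val i) p) g y by exact: H.
rewrite Sm_linl; apply: sumr_ge0 => i _; apply: mulr_ge0 => //.
move: (enum_val i) => c.
case: (pselect (exists p, ap a k' c p != 0)) => nz; last first.
  rewrite /Sm big1 // => p _.
  have -> : ap a k' c p.1 = 0.
    by apply/eqP; apply/negPn/negP => h; apply: nz; exists p.1.
  by rewrite !mul0r.
set Gs := \sum_q `|g q|.
have Hsplit : Sm (ap a k' c) g y =
    Sm (ap a k' c) g om + Sm (ap a k' c) g (fun p => y p - om p).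
  by rewrite /Sm -big_split; apply: eq_bigr => p _ /=; ring.
have HX : Sm (ap a k' c) g om = pair (wc k' c) g.
  rewrite /om (Sm_sum (ap a k' c) g (fun l => tpowv k' (xF l)) psi) /wc pair_suml.
  by apply: eq_bigr => l _; rewrite {1}/pair ap_pair pairC.
have HX2 : eps * (r * Gs) <= pair (wc k' c) g.
  case: (lerP (pair phi g) 0) => pg.
    have pg0 : pair phi g = 0 by apply/eqP; rewrite eq_le pg phi_ge0.
    have g0 := C_zero Cg pg0.
    have -> : Gs = 0 by rewrite /Gs big1 // => q _; rewrite g0 normr0.
    rewrite mulr0 mulr0 /pair big1 // => q _; by rewrite g0 mulr0.
  have := He c nz _ (C_scale Cg pg); rewrite pairZ mulrC ler_pdivlMr // => h.
  apply: le_trans h; apply: ler_wpM2l; first exact: ltW.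
  exact: Hr.
have HZ : `|Sm (ap a k' c) g (fun p => y p - om p)| <= (eps * r / A) * (A * Gs).
  rewrite /Sm; apply: (le_trans (ler_norm_sum _ _ _)).
  apply: (@le_trans _ _ (\sum_p (eps * r / A) * (`|ap a k' c p.1| * `|g p.2|))).
    apply: ler_sum => p _; rewrite !normrM [in leRHS]mulrC.
    by apply: ler_wpM2l; [apply: mulr_ge0 | apply: ltW; apply: Hy].
  rewrite -mulr_sumr; apply: ler_wpM2l; first exact: ltW.
  rewrite sum_pair.
  have -> : \sum_p1 \sum_p2 `|ap a k' c (p1, p2).1| * `|g (p1, p2).2| =
     (\sum_p1 `|ap a k' c p1|) * Gs.
    by rewrite mulr_suml; apply: eq_bigr => p1 _; rewrite mulr_sumr.
  apply: ler_wpM2r; [exact: sumr_ge0 | exact: Ac].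
have HE : (eps * r / A) * (A * Gs) = eps * (r * Gs).
  by field; rewrite gt_eqF.
rewrite HE in HZ.
have h3 := ler_norm (- Sm (ap a k' c) g (fun p => y p - om p)).
rewrite normrN in h3.
rewrite Hsplit HX; lra.
Qed.

End Geo.

Theorem proposition3 (R : realType) (I : finType) (C : (I -> R) -> Prop)
  (phi : I -> R) (k : nat) (m : nat) (Fs : 'I_m -> (I -> R) -> Prop)
  (xF psi : 'I_m -> I -> R) :
  polyhedral C -> proper_cone C ->
  interior_of (dual_cone C) phi ->
  (1 <= k)%N ->
  (forall l, is_facet (slice C phi) (Fs l)) ->
  (forall F, is_facet (slice C phi) F -> exists l, forall y, F y <-> Fs l y) ->
  (forall l l', (forall y, Fs l y <-> Fs l' y) -> l = l') ->
  (forall l, relint (Fs l) (xF l)) ->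
  (forall l, dual_cone C (psi l)) ->
  (forall l y, Fs l y <-> (slice C phi y /\ pair (psi l) y = 0)) ->
  interior_of (max_tensor (tpowC k.-1 C) (dual_cone C))
    (fun p : (tidx I k.-1 * I)%type =>
       \sum_(l < m) tpowv k.-1 (xF l) p.1 * psi l p.2)
  <->
  (forall x, is_vertex (slice C phi) x ->
     (k < #|[set l : 'I_m | `[< ~ Fs l x >]]|)%N).
Proof.
move=> [M [a Hpoly]] Hprop Hphi Hk Hfacet _ Hinj Hrel Hpsi HFs.
case: k Hk => [//|k'] _ /=.
split.
  move=> Hint x Hv.
  have Kx : slice C phi x by case: Hv => _ H _; apply: H.
  exact: (partA Hphi Hfacet Hrel Hpsi HFs Hint Kx).
move=> Hv.
exact: (partB Hprop Hphi Hfacet Hinj Hrel Hpsi HFs Hpoly Hv).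
Qed.
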